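(* For the system of $N$ symplectic point vortices in $\mathbb R^{2m}$ (the Hamiltonian system on $(\mathbb R^{2m})^N$ with Poisson bracket $\{f,g\}=\sum_{j=1}^N\frac1{\Gamma_j}\sum_{\alpha=1}^m\big(\frac{\partial f}{\partial x_{j,\alpha}}\frac{\partial g}{\partial y_{j,\alpha}}-\frac{\partial f}{\partial y_{j,\alpha}}\frac{\partial g}{\partial x_{j,\alpha}}\big)$ and Hamiltonian $\mathcal H=2C(2m)\sum_{j<k}\Gamma_j\Gamma_k|\tilde z_j-\tilde z_k|^{2-2m}$ for $m>1$, resp. $\mathcal H=-\frac1{4\pi}\sum_{j<k}\Gamma_j\Gamma_k\ln|\tilde z_j-\tilde z_k|^2$ for $m=1$), the functions $$\mathcal H,\qquad F^+_{\alpha\alpha}=\sum_{j=1}^N\Gamma_j(x_{j,\alpha}^2+y_{j,\alpha}^2),\qquad Q_\alpha^2+P_\alpha^2\quad(1\le\alpha\le m),$$ where $Q_\alpha=\sum_{j}\Gamma_jx_{j,\alpha}$ and $P_\alpha=\sum_j\Gamma_jy_{j,\alpha}$, provide $2m+1$ first integrals in involution on $(\mathbb R^{2m})^N$.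
   Context: $\tilde z_j=(x_{j,1},\dots,x_{j,m},y_{j,1},\dots,y_{j,m})\in\mathbb R^{2m}$ is the position of the $j$-th vortex, $\Gamma_j\neq0$ are real vortex strengths, $|\cdot|$ is the Euclidean norm, and $C(2m)$ is the constant with $\Delta(C(2m)|\tilde z|^{2-2m})=\delta$ in $\mathbb R^{2m}$. The equations of motion are $\Gamma_j\dot x_{j,\alpha}=\partial\mathcal H/\partial y_{j,\alpha}$, $\Gamma_j\dot y_{j,\alpha}=-\partial\mathcal H/\partial x_{j,\alpha}$. ''In involution'' means pairwise Poisson commuting. *)

(* Defs.v *)
From HB Require Import structures.
From mathcomp Require Import all_boot all_order all_algebra.
From mathcomp Require Import all_classical all_reals all_analysis.
Set Implicit Arguments. Unset Strict Implicit. Unset Printing Implicit Defensive.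
Import Order.TTheory GRing.Theory Num.Theory.
Local Open Scope ring_scope.

Section Vortex.
Variables (R : realType) (N m : nat).

(* A point of (R^{2m})^N : the coordinates x_{j,alpha} and y_{j,alpha},
   j : 'I_N, alpha : 'I_m (indices are 0-based). *)
Definition phase := (('I_N -> 'I_m -> R) * ('I_N -> 'I_m -> R))%type.

Definition upd (X : 'I_N -> 'I_m -> R) (j : 'I_N) (a : 'I_m) (t : R) :=
  fun k b => if (k == j) && (b == a) then t else X k b.

Definition dX (f : phase -> R) (p : phase) (j : 'I_N) (a : 'I_m) : R :=
  derive1 (fun t => f (upd p.1 j a t, p.2)) (p.1 j a).
Definition dY (f : phase -> R) (p : phase) (j : 'I_N) (a : 'I_m) : R :=
  derive1 (fun t => f (p.1, upd p.2 j a t)) (p.2 j a).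

Definition has_partials (f : phase -> R) (p : phase) : Prop :=
  forall (j : 'I_N) (a : 'I_m),
    derivable (fun t => f (upd p.1 j a t, p.2)) (p.1 j a) 1 /\
    derivable (fun t => f (p.1, upd p.2 j a t)) (p.2 j a) 1.

Definition poisson (Gam : 'I_N -> R) (f g : phase -> R) (p : phase) : R :=
  \sum_(j < N) (Gam j)^-1 *
    \sum_(a < m) (dX f p j a * dY g p j a - dY f p j a * dX g p j a).

Definition dist2 (p : phase) (j k : 'I_N) : R :=
  \sum_(a < m) ((p.1 j a - p.1 k a) ^+ 2 + (p.2 j a - p.2 k a) ^+ 2).

(* collision-free configurations (where H is defined) *)
Definition no_collision (p : phase) : Prop :=
  forall j k : 'I_N, j != k -> dist2 p j k != 0.

(* C(2m), m >= 2: the constant with Delta (C(2m) |z|^{2-2m}) = delta in R^{2m},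
   i.e. C(n) = -1/((n-2) |S^{n-1}|) with |S^{2m-1}| = 2 pi^m/(m-1)!,
   giving C(2m) = -(m-2)!/(4 pi^m). *)
Definition C2m : R := - ((m - 2)`!)%:R / (4 * pi ^+ m).

(* The Hamiltonian (|z|^{2-2m} = (|z|^2)^-(m-1)). *)
Definition Ham (Gam : 'I_N -> R) (p : phase) : R :=
  if m == 1%N then
    - (4 * pi)^-1 * \sum_(j < N) \sum_(k < N | (j < k)%N)
        Gam j * Gam k * ln (dist2 p j k)
  else
    2 * C2m * \sum_(j < N) \sum_(k < N | (j < k)%N)
        Gam j * Gam k * (dist2 p j k) ^- (m - 1).

Definition Fpl (Gam : 'I_N -> R) (a : 'I_m) (p : phase) : R :=
  \sum_(j < N) Gam j * (p.1 j a ^+ 2 + p.2 j a ^+ 2).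

Definition Qc (Gam : 'I_N -> R) (a : 'I_m) (p : phase) : R :=
  \sum_(j < N) Gam j * p.1 j a.
Definition Pc (Gam : 'I_N -> R) (a : 'I_m) (p : phase) : R :=
  \sum_(j < N) Gam j * p.2 j a.

(* The family of 2m+1 functions: None |-> H, Some (inl a) |-> F^+_{aa},
   Some (inr a) |-> Q_a^2 + P_a^2. *)
Definition integrals (Gam : 'I_N -> R) (i : option ('I_m + 'I_m)) : phase -> R :=
  match i with
  | None => Ham Gam
  | Some (inl a) => Fpl Gam a
  | Some (inr a) => fun p => Qc Gam a p ^+ 2 + Pc Gam a p ^+ 2
  end.

End Vortex.

(* Main.v *)
Require Import Defs.
From HB Require Import structures.
From mathcomp Require Import all_boot all_order all_algebra.
From mathcomp Require Import all_classical all_reals all_analysis.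
From mathcomp Require Import ring lra.
Import Order.TTheory GRing.Theory Num.Theory.
Local Open Scope ring_scope.
Set Implicit Arguments. Unset Strict Implicit.

Section Der.
Variable R : realType.
Implicit Types (f g : R -> R) (x df dg : R).

Lemma deq f x d d' : is_derive x 1 f d -> d = d' -> is_derive x 1 f d'.
Proof. by move=> H <-. Qed.

Lemma dv_cst x (c : R) : is_derive x 1 (fun _ : R => c) 0.
Proof. exact: is_derive_cst. Qed.

Lemma dv_id x : is_derive x 1 (fun t : R => t) 1.
Proof. exact: is_derive_id. Qed.

Lemma dv_add f g x df dg : is_derive x 1 f df -> is_derive x 1 g dg ->
  is_derive x 1 (fun t => f t + g t) (df + dg).
Proof. by move=> H1 H2; have := is_deriveD H1 H2. Qed.

Lemma dv_sub f g x df dg : is_derive x 1 f df -> is_derive x 1 g dg ->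
  is_derive x 1 (fun t => f t - g t) (df - dg).
Proof. by move=> H1 H2; have := is_deriveB H1 H2. Qed.

Lemma dv_mul f g x df dg : is_derive x 1 f df -> is_derive x 1 g dg ->
  is_derive x 1 (fun t => f t * g t) (f x * dg + g x * df).
Proof. by move=> H1 H2; have := is_deriveM H1 H2. Qed.

Lemma dv_cmul (c : R) f x df : is_derive x 1 f df ->
  is_derive x 1 (fun t => c * f t) (c * df).
Proof.
move=> H; apply: deq (dv_mul (dv_cst x c) H) _; ring.
Qed.

Lemma dv_sum n (h : 'I_n -> R -> R) (dh : 'I_n -> R) x :
  (forall i, is_derive x 1 (h i) (dh i)) ->
  is_derive x 1 (fun t => \sum_(i < n) h i t) (\sum_(i < n) dh i).
Proof. by move=> H; have := is_derive_sum H; rewrite fct_sumE. Qed.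

Lemma dv_sumP n (P : pred 'I_n) (h : 'I_n -> R -> R) (dh : 'I_n -> R) x :
  (forall i, P i -> is_derive x 1 (h i) (dh i)) ->
  is_derive x 1 (fun t => \sum_(i < n | P i) h i t) (\sum_(i < n | P i) dh i).
Proof.
move=> H.
have -> : (fun t => \sum_(i < n | P i) h i t) =
   (fun t => \sum_(i < n) (if P i then h i t else 0)).
  by apply/funext => t; rewrite big_mkcond.
rewrite big_mkcond; apply: dv_sum => i.
case Pi: (P i); first exact: H.
exact: dv_cst.
Qed.

Lemma dv_comp (phi : R -> R) dphi f x df :
  is_derive (f x) 1 phi dphi -> is_derive x 1 f df ->
  is_derive x 1 (fun t => phi (f t)) (dphi * df).
Proof. by move=> H1 H2; have := is_derive1_comp H1 H2. Qed.

Lemma dv_exp n f x df : is_derive x 1 f df ->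
  is_derive x 1 (fun t => f t ^+ n) (n%:R * f x ^+ n.-1 * df).
Proof.
move=> H; elim: n => [|n IH].
  by apply: deq (dv_cst x 1) _; rewrite mul0r mul0r.
have E : (fun t => f t ^+ n.+1) = (fun t => f t * f t ^+ n).
  by apply/funext => t; rewrite exprS.
rewrite E; apply: deq (dv_mul H IH) _.
case: n {IH E} => [|n] /=; first by rewrite !expr0; ring.
rewrite !exprS -[(n.+2)%:R]natr1 -[(n.+1)%:R]natr1; ring.
Qed.

Lemma dv_inv f x df : f x != 0 -> is_derive x 1 f df ->
  is_derive x 1 (fun t => (f t)^-1) (- (f x) ^- 2 * df).
Proof. by move=> H1 H2; have := is_deriveV H1 H2. Qed.

End Der.

Section V.
Variables (R : realType) (N m : nat) (Gam : 'I_N -> R).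
Local Notation ph := (phase R N m).
Local Notation Mat := ('I_N -> 'I_m -> R).

Lemma sum_delta n (g : 'I_n -> R) c : \sum_(k < n) g k * (k == c)%:R = g c.
Proof.
rewrite (bigD1 c) //= eqxx mulr1 big1 ?addr0 // => k /negPf ->; by rewrite mulr0.
Qed.

Lemma sum_deltaA n (g : 'I_n -> R) c (P : bool) :
  \sum_(k < n) g k * ((k == c) && P)%:R = g c * P%:R.
Proof.
case: P; first by rewrite (eq_bigr (fun k => g k * (k == c)%:R)) ?sum_delta ?mulr1 // => k _; rewrite andbT.
by rewrite big1 ?mulr0 // => k _; rewrite andbF mulr0.
Qed.

Lemma sum_deltaL n (g : 'I_n -> R) c : \sum_(k < n) g k * (c == k)%:R = g c.
Proof. by under eq_bigr do rewrite eq_sym; exact: sum_delta. Qed.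

Lemma upd_id (X : Mat) i a : upd X i a (X i a) = X.
Proof.
apply/funext => k; apply/funext => b; rewrite /upd.
by case: andP => // [[/eqP -> /eqP ->]].
Qed.

Lemma dv_upd (X : Mat) i a k b :
  is_derive (X i a) 1 (fun t => upd X i a t k b) ((k == i) && (b == a))%:R.
Proof.
rewrite /upd; case: ((k == i) && (b == a)) => /=; [exact: dv_id | exact: dv_cst].
Qed.

Definition swp (p : ph) : ph := (p.2, p.1).

Lemma dX_of (f : ph -> R) (X Y : Mat) i a d :
  is_derive (X i a) 1 (fun t => f (upd X i a t, Y)) d -> dX f (X, Y) i a = d.
Proof. by move=> H; rewrite /dX derive1E /=; exact: derive_val. Qed.

Lemma dY_swap (f : ph -> R) (X Y : Mat) i a :
  (forall q, f (swp q) = f q) -> dY f (X, Y) i a = dX f (Y, X) i a.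
Proof.
move=> H; rewrite /dY /dX /=; congr derive1; apply/funext => t.
exact: (H (upd Y i a t, X)).
Qed.

Lemma partials_of (f : ph -> R) (dfx : Mat -> Mat -> 'I_N -> 'I_m -> R) :
  (forall q, f (swp q) = f q) ->
  (forall (X Y : Mat) i a, is_derive (X i a) 1 (fun t => f (upd X i a t, Y)) (dfx X Y i a)) ->
  forall p : ph, has_partials f p.
Proof.
move=> Hs Hd [X Y] i a; split; first by case: (Hd X Y i a).
have E : (fun t => f ((X, Y).1, upd (X, Y).2 i a t)) = (fun t => f (upd Y i a t, X)).
  by apply/funext => t; exact: (Hs (upd Y i a t, X)).
by rewrite E; case: (Hd Y X i a).
Qed.

Lemma term_F b (X Y : Mat) i a j :
  is_derive (X i a) 1 (fun t => Gam j * (upd X i a t j b ^+ 2 + Y j b ^+ 2))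
    (Gam j * (2 * X j b) * ((j == i) && (b == a))%:R).
Proof.
apply: deq.
  apply: dv_cmul; apply: dv_add; try exact: dv_cst.
  apply: dv_exp; exact: dv_upd.
by rewrite /= upd_id expr1; ring.
Qed.

Lemma dv_Fpl b (X Y : Mat) i a :
  is_derive (X i a) 1 (fun t => Fpl Gam b (upd X i a t, Y))
    (2 * Gam i * X i a * (b == a)%:R).
Proof.
rewrite /Fpl /=; apply: deq; first by apply: dv_sum => j; exact: term_F.
rewrite (sum_deltaA (fun k => Gam k * (2 * X k b))).
by case: eqP => [->|_] /=; ring.
Qed.

Lemma Fpl_swp b q : Fpl Gam b (swp q) = Fpl Gam b q.
Proof. by rewrite /Fpl; apply: eq_bigr => j _; rewrite addrC. Qed.

Definition QP b (p : ph) := Qc Gam b p ^+ 2 + Pc Gam b p ^+ 2.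

Lemma term_Q b (X : Mat) i a j :
  is_derive (X i a) 1 (fun t => Gam j * upd X i a t j b)
    (Gam j * ((j == i) && (b == a))%:R).
Proof. apply: dv_cmul; exact: dv_upd. Qed.

Lemma dv_Q b (X : Mat) i a :
  is_derive (X i a) 1 (fun t => \sum_(j < N) Gam j * upd X i a t j b)
    (\sum_(j < N) Gam j * ((j == i) && (b == a))%:R).
Proof. by apply: dv_sum => j; exact: term_Q. Qed.

Lemma dv_QP b (X Y : Mat) i a :
  is_derive (X i a) 1 (fun t => QP b (upd X i a t, Y))
    (2 * Qc Gam b (X, Y) * Gam i * (b == a)%:R).
Proof.
rewrite /QP /Qc /Pc /=; apply: deq.
  apply: dv_add; try exact: dv_cst.
  apply: dv_exp; exact: dv_Q.
rewrite /= upd_id.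
rewrite (sum_deltaA (fun k => Gam k)).
by case: eqP => [->|_] /=; ring.
Qed.

Lemma QP_swp b q : QP b (swp q) = QP b q.
Proof. by rewrite /QP addrC. Qed.


Lemma dist2_ge0 (p : ph) j k : 0 <= dist2 p j k.
Proof. by apply: sumr_ge0 => b _; apply: addr_ge0; exact: sqr_ge0. Qed.

Lemma dist2_swp (q : ph) j k : dist2 (swp q) j k = dist2 q j k.
Proof. by rewrite /dist2; apply: eq_bigr => b _; rewrite addrC. Qed.

Lemma term_d (X Y : Mat) i a j k b :
  is_derive (X i a) 1
    (fun t => (upd X i a t j b - upd X i a t k b) ^+ 2 + (Y j b - Y k b) ^+ 2)
    (2 * (X j b - X k b) * (((j == i) && (b == a))%:R - ((k == i) && (b == a))%:R)).
Proof.
apply: deq.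
  apply: dv_add; try exact: dv_cst.
  apply: dv_exp; apply: dv_sub; exact: dv_upd.
by rewrite /= upd_id expr1; ring.
Qed.

Lemma dv_dist2 (X Y : Mat) i a j k :
  is_derive (X i a) 1 (fun t => dist2 (upd X i a t, Y) j k)
    (2 * (X j a - X k a) * ((j == i)%:R - (k == i)%:R)).
Proof.
rewrite /dist2 /=; apply: deq; first by apply: dv_sum => b; exact: term_d.
rewrite (eq_bigr (fun b => (2 * (X j b - X k b) * ((j == i)%:R - (k == i)%:R)) * (b == a)%:R)).
  by rewrite (sum_delta (fun b => 2 * (X j b - X k b) * ((j == i)%:R - (k == i)%:R))).
by move=> b _; case: (b == a); rewrite ?andbT ?andbF /=; ring.
Qed.

Variables (K : R) (phi phi' : R -> R).
Hypothesis Hphi : forall x : R, 0 < x -> is_derive x 1 phi (phi' x).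

Definition cf (X Y : Mat) j k := Gam j * Gam k * phi' (dist2 (X, Y) j k).

Lemma cf_swp X Y : cf Y X = cf X Y.
Proof. by apply/funext => j; apply/funext => k; rewrite /cf (dist2_swp (X, Y)). Qed.

Lemma term_H (X Y : Mat) i a j k : 0 < dist2 (X, Y) j k ->
  is_derive (X i a) 1 (fun t => Gam j * Gam k * phi (dist2 (upd X i a t, Y) j k))
    (cf X Y j k * (2 * (X j a - X k a) * ((j == i)%:R - (k == i)%:R))).
Proof.
move=> hd; apply: deq.
  apply: dv_cmul.
  apply: (dv_comp (phi := phi) (f := fun t => dist2 (upd X i a t, Y) j k)); last exact: dv_dist2.
  by rewrite /= upd_id; exact: Hphi.
by rewrite /cf mulrA.
Qed.

Definition HG (p : ph) := K * \sum_(j < N) \sum_(k < N | (j < k)%N)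
  Gam j * Gam k * phi (dist2 p j k).

Definition dHG (c : 'I_N -> 'I_N -> R) (Z : 'I_N -> R) i :=
  K * \sum_(j < N) \sum_(k < N | (j < k)%N)
     c j k * (2 * (Z j - Z k) * ((j == i)%:R - (k == i)%:R)).

Lemma inner_H (X Y : Mat) i a (j : 'I_N) : no_collision (X, Y) ->
  is_derive (X i a) 1
    (fun t => \sum_(k < N | (j < k)%N) Gam j * Gam k * phi (dist2 (upd X i a t, Y) j k))
    (\sum_(k < N | (j < k)%N) cf X Y j k * (2 * (X j a - X k a) * ((j == i)%:R - (k == i)%:R))).
Proof.
move=> nc; apply: dv_sumP => k jk; apply: term_H.
rewrite lt0r dist2_ge0 andbT; apply: nc.
by apply/eqP => E; move: jk; rewrite E ltnn.
Qed.

Lemma dv_HG (X Y : Mat) i a : no_collision (X, Y) ->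
  is_derive (X i a) 1 (fun t => HG (upd X i a t, Y)) (dHG (cf X Y) (fun j => X j a) i).
Proof.
move=> nc; rewrite /HG /dHG; apply: dv_cmul; apply: dv_sum => j; exact: inner_H.
Qed.

Lemma HG_swp q : HG (swp q) = HG q.
Proof.
rewrite /HG; congr (_ * _); apply: eq_bigr => j _; apply: eq_bigr => k _.
by rewrite dist2_swp.
Qed.

Lemma sum_e n (h : 'I_n -> R) j k :
  \sum_(i < n) h i * ((j == i)%:R - (k == i)%:R) = h j - h k.
Proof.
rewrite (eq_bigr (fun i => h i * (j == i)%:R - h i * (k == i)%:R)); last first.
  by move=> i _; rewrite mulrBr.
by rewrite sumrB !(sum_deltaL h).
Qed.

Lemma dHG_sum c Z : \sum_(i < N) dHG c Z i = 0.
Proof.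
rewrite /dHG -mulr_sumr exchange_big big1 ?mulr0 // => j _.
rewrite exchange_big big1 // => k _.
rewrite (eq_bigr (fun i => (c j k * (2 * (Z j - Z k))) * ((j == i)%:R - (k == i)%:R))).
  by rewrite (sum_e (fun _ => c j k * (2 * (Z j - Z k)))) subrr.
by move=> i _; rewrite mulrA.
Qed.

Lemma dHG_rot c Z W : \sum_(i < N) (dHG c Z i * W i - dHG c W i * Z i) = 0.
Proof.
rewrite /dHG.
rewrite (eq_bigr (fun i => K * \sum_(j < N) \sum_(k < N | (j < k)%N)
   (c j k * 2 * ((Z j - Z k) * W i - (W j - W k) * Z i)) * ((j == i)%:R - (k == i)%:R))); last first.
  move=> i _; rewrite -mulrA -[_ * Z i]mulrA -mulrBr; congr (K * _).
  rewrite !mulr_suml -sumrB; apply: eq_bigr => j _.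
  rewrite !mulr_suml -sumrB; apply: eq_bigr => k _; ring.
rewrite -mulr_sumr exchange_big big1 ?mulr0 // => j _.
rewrite exchange_big big1 // => k _.
rewrite (sum_e (fun i => c j k * 2 * ((Z j - Z k) * W i - (W j - W k) * Z i))); ring.
Qed.

End V.

Section P.
Variables (R : realType) (N m : nat) (Gam : 'I_N -> R).
Hypothesis hG : forall j, Gam j != 0.
Local Notation ph := (phase R N m).
Local Notation Mat := ('I_N -> 'I_m -> R).

Lemma dXF b (X Y : Mat) : dX (Fpl Gam b) (X, Y) = fun i a => 2 * Gam i * X i a * (b == a)%:R.
Proof. by apply/funext => i; apply/funext => a; apply: dX_of; exact: dv_Fpl. Qed.

Lemma dYF b (X Y : Mat) : dY (Fpl Gam b) (X, Y) = fun i a => 2 * Gam i * Y i a * (b == a)%:R.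
Proof.
apply/funext => i; apply/funext => a; rewrite dY_swap; last exact: Fpl_swp.
by apply: dX_of; exact: dv_Fpl.
Qed.

Lemma dXQ b (X Y : Mat) : dX (QP Gam b) (X, Y) = fun i a => 2 * Qc Gam b (X, Y) * Gam i * (b == a)%:R.
Proof. by apply/funext => i; apply/funext => a; apply: dX_of; exact: dv_QP. Qed.

Lemma dYQ b (X Y : Mat) : dY (QP Gam b) (X, Y) = fun i a => 2 * Pc Gam b (X, Y) * Gam i * (b == a)%:R.
Proof.
apply/funext => i; apply/funext => a; rewrite dY_swap; last exact: QP_swp.
by apply: dX_of; exact: dv_QP.
Qed.

Lemma nc_swp (X Y : Mat) : no_collision (X, Y) -> no_collision (Y, X).
Proof. by move=> nc j k jk; rewrite -(dist2_swp (Y, X)); exact: nc. Qed.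

Section H.
Variables (K : R) (phi phi' : R -> R).
Hypothesis Hphi : forall x : R, 0 < x -> is_derive x 1 phi (phi' x).

Lemma dXH (X Y : Mat) : no_collision (X, Y) ->
  dX (HG Gam K phi) (X, Y) = fun i a => dHG K (cf Gam phi' X Y) (fun j => X j a) i.
Proof. by move=> nc; apply/funext => i; apply/funext => a; apply: dX_of; exact: dv_HG. Qed.

Lemma dYH (X Y : Mat) : no_collision (X, Y) ->
  dY (HG Gam K phi) (X, Y) = fun i a => dHG K (cf Gam phi' X Y) (fun j => Y j a) i.
Proof.
move=> nc; apply/funext => i; apply/funext => a; rewrite dY_swap; last exact: HG_swp.
rewrite -(cf_swp Gam phi' X Y); apply: dX_of; apply: dv_HG => //; exact: nc_swp.
Qed.

End H.

Lemma partials_at (f : ph -> R) (dfx : Mat -> Mat -> 'I_N -> 'I_m -> R) (X Y : Mat) :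
  (forall q, f (swp q) = f q) ->
  (forall i a, is_derive (X i a) 1 (fun t => f (upd X i a t, Y)) (dfx X Y i a)) ->
  (forall i a, is_derive (Y i a) 1 (fun t => f (upd Y i a t, X)) (dfx Y X i a)) ->
  has_partials f (X, Y).
Proof.
move=> Hs Hd1 Hd2 i a; split; first by case: (Hd1 i a).
have E : (fun t => f ((X, Y).1, upd (X, Y).2 i a t)) = (fun t => f (upd Y i a t, X)).
  by apply/funext => t; exact: (Hs (upd Y i a t, X)).
by rewrite E; case: (Hd2 i a).
Qed.

Lemma poisson_anti (f g : ph -> R) p : poisson Gam f g p = - poisson Gam g f p.
Proof.
rewrite /poisson -sumrN; apply: eq_bigr => j _; rewrite -mulrN -sumrN.
by congr (_ * _); apply: eq_bigr => c _; ring.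
Qed.

Lemma poisson_self (f : ph -> R) p : poisson Gam f f p = 0.
Proof.
rewrite /poisson big1 // => j _; rewrite big1 ?mulr0 // => c _.
by rewrite mulrC subrr.
Qed.

Lemma poisson_F (f : ph -> R) b (X Y : Mat) :
  poisson Gam f (Fpl Gam b) (X, Y) =
  2 * \sum_(j < N) (dX f (X, Y) j b * Y j b - dY f (X, Y) j b * X j b).
Proof.
rewrite /poisson dXF dYF mulr_sumr; apply: eq_bigr => j _.
rewrite (eq_bigr (fun c => (2 * Gam j * (dX f (X, Y) j c * Y j c - dY f (X, Y) j c * X j c)) * (b == c)%:R)).
  rewrite (sum_deltaL (fun c => 2 * Gam j * (dX f (X, Y) j c * Y j c - dY f (X, Y) j c * X j c))).
  by field; exact: hG.
by move=> c _; ring.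
Qed.

Lemma poisson_Q (f : ph -> R) b (X Y : Mat) :
  poisson Gam f (QP Gam b) (X, Y) =
  2 * \sum_(j < N) (Pc Gam b (X, Y) * dX f (X, Y) j b - Qc Gam b (X, Y) * dY f (X, Y) j b).
Proof.
rewrite /poisson dXQ dYQ [in RHS]mulr_sumr; apply: eq_bigr => j _.
rewrite (eq_bigr (fun c => (2 * Gam j * (Pc Gam b (X, Y) * dX f (X, Y) j c - Qc Gam b (X, Y) * dY f (X, Y) j c)) * (b == c)%:R)).
  rewrite (sum_deltaL (fun c => 2 * Gam j * (Pc Gam b (X, Y) * dX f (X, Y) j c - Qc Gam b (X, Y) * dY f (X, Y) j c))).
  by field; exact: hG.
by move=> c _; ring.
Qed.

End P.

Section Q.
Variables (R : realType) (N m : nat) (Gam : 'I_N -> R).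
Hypothesis hG : forall j, Gam j != 0.
Local Notation ph := (phase R N m).
Local Notation Mat := ('I_N -> 'I_m -> R).
Variables (K : R) (phi phi' : R -> R).
Hypothesis Hphi : forall x : R, 0 < x -> is_derive x 1 phi (phi' x).
Variables (X Y : Mat).
Hypothesis nc : no_collision (X, Y).

Lemma PF_H b : poisson Gam (HG Gam K phi) (Fpl Gam b) (X, Y) = 0.
Proof.
rewrite poisson_F // (dXH Gam K Hphi nc) (dYH Gam K Hphi nc) /=.
move: (dHG_rot K (cf Gam phi' X Y) (fun j => X j b) (fun j => Y j b)) => /= ->.
by rewrite mulr0.
Qed.

Lemma PF_F a b : poisson Gam (Fpl Gam a) (Fpl Gam b) (X, Y) = 0.
Proof.
rewrite poisson_F // dXF dYF /= big1 ?mulr0 // => j _; ring.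
Qed.

Lemma PF_Q a b : poisson Gam (QP Gam a) (Fpl Gam b) (X, Y) = 0.
Proof.
rewrite poisson_F // dXQ dYQ /=.
case: (eqVneq a b) => [<-|nab]; last first.
  by rewrite big1 ?mulr0 // => j _ /=; ring.
rewrite /=.
rewrite (eq_bigr (fun j => 2 * Qc Gam a (X, Y) * (Gam j * Y j a) - 2 * Pc Gam a (X, Y) * (Gam j * X j a))); last by move=> j _; ring.
rewrite sumrB -!mulr_sumr /Pc /Qc /=; ring.
Qed.

Lemma PQ_H b : poisson Gam (HG Gam K phi) (QP Gam b) (X, Y) = 0.
Proof.
rewrite poisson_Q // (dXH Gam K Hphi nc) (dYH Gam K Hphi nc) /=.
rewrite sumrB -[X in _ * (X - _)]mulr_sumr -[X in _ * (_ - X)]mulr_sumr.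
move: (dHG_sum K (cf Gam phi' X Y) (fun j => X j b)) => /= ->.
move: (dHG_sum K (cf Gam phi' X Y) (fun j => Y j b)) => /= ->.
ring.
Qed.

Lemma PQ_F a b : poisson Gam (Fpl Gam a) (QP Gam b) (X, Y) = 0.
Proof.
rewrite poisson_Q // dXF dYF /=.
case: (eqVneq a b) => [<-|nab]; last first.
  by rewrite big1 ?mulr0 // => j _ /=; ring.
rewrite /=.
rewrite (eq_bigr (fun j => 2 * Pc Gam a (X, Y) * (Gam j * X j a) - 2 * Qc Gam a (X, Y) * (Gam j * Y j a))); last by move=> j _; ring.
rewrite sumrB -!mulr_sumr /Pc /Qc /=; ring.
Qed.

Lemma PQ_Q a b : poisson Gam (QP Gam a) (QP Gam b) (X, Y) = 0.
Proof.
rewrite poisson_Q // dXQ dYQ /=.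
case: (eqVneq a b) => [<-|nab]; last first.
  by rewrite big1 ?mulr0 // => j _ /=; ring.
by rewrite big1 ?mulr0 // => j _; ring.
Qed.

End Q.

Lemma H_facts (R : realType) (N m : nat) (Gam : 'I_N -> R) :
  exists K (phi phi' : R -> R), (forall x : R, 0 < x -> is_derive x 1 phi (phi' x)) /\
    Ham Gam = HG (m := m) Gam K phi.
Proof.
have [m1|m1] := eqVneq m 1%N.
  exists (- (4 * pi)^-1), (@ln R), (fun x => x^-1); split.
    by move=> x hx; exact: is_derive1_ln.
  by apply/funext => p; rewrite /Ham /HG (_ : (m == 1)%N = true) //; apply/eqP.
exists (2 * C2m R m), (fun x => x ^- (m - 1)),
  (fun x => - (x ^+ (m - 1)) ^- 2 * ((m - 1)%:R * x ^+ (m - 1).-1 * 1)); split.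
  move=> x hx; apply: dv_inv; first by rewrite expf_neq0 // gt_eqF.
  exact: dv_exp (dv_id x).
by apply/funext => p; rewrite /Ham /HG (negbTE m1).
Qed.

Unset Implicit Arguments. Set Strict Implicit.

Theorem corollary4p4 (R : realType) (N m : nat) (Gam : 'I_N -> R) :
  (0 < m)%N ->
  (forall j, Gam j != 0) ->
  #|{: option ('I_m + 'I_m)}| = (2 * m + 1)%N /\
  forall p : phase R N m, no_collision p ->
    (forall i, has_partials (integrals Gam i) p) /\
    (forall i i', poisson Gam (integrals Gam i) (integrals Gam i') p = 0).
Proof.
move=> _ hG; split.
  by rewrite card_option card_sum card_ord addn1 mul2n addnn.
case=> X Y nc.
have [K [phi [phi' [Hphi HE]]]] := @H_facts R N m Gam.
have Ei : forall i : option ('I_m + 'I_m), integrals Gam i =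
   match i with None => HG Gam K phi | Some (inl a) => Fpl Gam a | Some (inr a) => QP Gam a end.
  by case=> [[a|a]|] //=; exact: HE.
split.
  case=> [[b|b]|]; rewrite Ei.
  - apply: (partials_at (dfx := fun X Y i a => 2 * Gam i * X i a * (b == a)%:R)).
    + exact: Fpl_swp.
    + by move=> i a; exact: dv_Fpl.
    + by move=> i a; exact: dv_Fpl.
  - apply: (partials_at (dfx := fun X Y i a => 2 * Qc Gam b (X, Y) * Gam i * (b == a)%:R)).
    + exact: QP_swp.
    + by move=> i a; exact: dv_QP.
    + by move=> i a; exact: dv_QP.
  - apply: (partials_at (dfx := fun X Y i a => dHG K (cf Gam phi' X Y) (fun j => X j a) i)).
    + exact: HG_swp.
    + by move=> i a; exact: dv_HG.
    + by move=> i a; apply: dv_HG => //; exact: nc_swp.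
move=> i i'; rewrite !Ei.
case: i' => [[b|b]|].
- case: i => [[a|a]|].
  + exact: PF_F.
  + exact: PF_Q.
  + exact: (PF_H hG K Hphi nc).
- case: i => [[a|a]|].
  + exact: PQ_F.
  + exact: PQ_Q.
  + exact: (PQ_H hG K Hphi nc).
- case: i => [[a|a]|].
  + by rewrite poisson_anti (PF_H hG K Hphi nc) oppr0.
  + by rewrite poisson_anti (PQ_H hG K Hphi nc) oppr0.
  + exact: poisson_self.
Qed.
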